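(* The full subcategory $\mathbf{Top}_{d^{\ast}}$ of $\mathbf{Top}_0$ consisting of all $d^{\ast}$-spaces and continuous maps is not a reflective subcategory of $\mathbf{Top}_0$.
   Context: $\mathbf{Top}_0$ is the category of $T_0$-spaces and continuous maps. A full subcategory is reflective if its inclusion functor has a left adjoint. The specialization order of a space $X$ is given by $x\le y$ iff $x\in cl(\{y\})$; ${\uparrow}$ is taken with respect to it. A $T_0$-space $X$ is a $d^{\ast}$-space if for every directed $D\subseteq X$ (in the specialization order), every $x\in X$ and every nonempty open $U\subseteq X$, $\bigcap_{d\in D}{\uparrow}d\cap{\uparrow}x\subseteq U$ implies ${\uparrow}d\cap{\uparrow}x\subseteq U$ for some $d\in D$. *)

(* Defs.v *)
From HB Require Import structures.
From mathcomp Require Import all_boot all_order.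
From mathcomp Require Import all_classical topology.
Set Implicit Arguments. Unset Strict Implicit. Unset Printing Implicit Defensive.
Local Open Scope classical_set_scope.

Definition spec_le (X : topologicalType) (x y : X) : Prop :=
  closure [set y] x.

Definition upset (X : topologicalType) (x : X) : set X :=
  [set z | spec_le x z].

Definition directed (X : topologicalType) (D : set X) : Prop :=
  D !=set0 /\
  forall a b, D a -> D b -> exists2 c, D c & spec_le a c /\ spec_le b c.

Definition dstar_space (X : topologicalType) : Prop :=
  forall (D : set X) (x : X) (U : set X),
    directed D -> open U -> U !=set0 ->
    (\bigcap_(d in D) upset d) `&` upset x `<=` U ->
    exists2 d, D d & upset d `&` upset x `<=` U.

Definition dstar_reflective : Prop :=
  forall X : topologicalType, kolmogorov_space X ->
  exists (Y : topologicalType) (eta : X -> Y),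
    [/\ kolmogorov_space Y, dstar_space Y, continuous eta &
      forall Z : topologicalType, kolmogorov_space Z -> dstar_space Z ->
      forall f : X -> Z, continuous f ->
      exists! g : Y -> Z, continuous g /\ g \o eta = f].

(* Main.v *)
From HB Require Import structures.
Require Import Defs.
From mathcomp Require Import all_boot all_order.
From mathcomp Require Import all_classical topology.
Set Implicit Arguments. Unset Strict Implicit. Unset Printing Implicit Defensive.
Local Open Scope classical_set_scope.

Section Alex.
Variables (T : choiceType) (le : T -> T -> Prop).
Definition alex (le' : T -> T -> Prop) : Type := T.
Definition upcl (A : set T) := forall x y, A x -> le x y -> A y.
HB.instance Definition _ := Choice.on (alex le).
Let opT : upcl setT. Proof. by []. Qed.
Let opI : setI_closed upcl.
Proof. by move=> A B hA hB x y [Ax Bx] lxy; split; [exact: hA Ax lxy|exact: hB Bx lxy]. Qed.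
Let opU : forall (I : Type) (f : I -> set T), (forall i, upcl (f i)) -> upcl (\bigcup_i f i).
Proof. by move=> I f hf x y [i _ fx] lxy; exists i => //; exact: hf fx lxy. Qed.
HB.instance Definition _ := isOpenTopological.Build (alex le) opT opI opU.
End Alex.

Section AlexTh.
Variables (T : choiceType) (le : T -> T -> Prop).
Hypothesis le_refl : forall x, le x x.
Hypothesis le_trans : forall x y z, le x y -> le y z -> le x z.

Lemma alex_nbhs (p : alex le) (B : set (alex le)) :
  nbhs p B <-> exists O, [/\ upcl le O, O p & O `<=` B].
Proof. exact: iff_refl. Qed.

Lemma alex_open (A : set (alex le)) : open A <-> upcl le A.
Proof.
rewrite openE; split.
  move=> h x y Ax lxy; have /alex_nbhs [O [uO Ox OA]] := h x Ax.
  exact/OA/(uO x).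
by move=> uA x Ax; rewrite /interior /=; apply/alex_nbhs; exists A; split.
Qed.

Lemma alex_spec (x y : alex le) : spec_le x y <-> le x y.
Proof.
split.
  move=> h; have : nbhs x [set z | le x z].
    apply/alex_nbhs; exists [set z | le x z]; split => //.
    by move=> a b /= h1 h2; exact: le_trans h1 h2.
  by move=> /h [z [-> /=]].
move=> lxy B /alex_nbhs [O [uO Ox OB]]; exists y; split => //.
exact/OB/(uO x).
Qed.
End AlexTh.

Lemma spec_mono (X Y : topologicalType) (f : X -> Y) (x y : X) :
  continuous f -> spec_le x y -> spec_le (f x) (f y).
Proof.
move=> cf h B Bn.
have : nbhs x (f @^-1` B) by exact: cf.
by move=> /h [z [-> /= Bfy]]; exists (f y).
Qed.

Lemma transfer (X Y : topologicalType) (eta : X -> Y) (k : Y -> X) :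
  continuous eta -> continuous k -> (forall p, k (eta p) = p) ->
  dstar_space Y -> dstar_space X.
Proof.
move=> ce ck ke dY D x U [[d0 Dd0] dirD] oU [u Uu] hyp.
have := dY (eta @` D) (eta x) (k @^-1` U).
case.
- split; first by exists (eta d0), d0.
  move=> _ _ [a Da <-] [b Db <-].
  have [c Dc [lac lbc]] := dirD a b Da Db.
  by exists (eta c); [exists c|split; apply: spec_mono].
- by move/continuousP: ck; apply.
- by exists (eta u); rewrite /= ke.
- move=> y [hy hx]; apply: hyp; split.
    move=> d Dd; rewrite /upset /=.
    by rewrite -(ke d); apply: spec_mono => //; apply: hy; exists d.
  by rewrite /upset /= -(ke x); apply: spec_mono.
- move=> _ [d Dd <-] h; exists d => // z [hz1 hz2].
  rewrite -(ke z); apply: h; split; by apply: spec_mono.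
Qed.

Section AlexMore.
Variables (T : choiceType) (le : T -> T -> Prop).
Hypothesis le_refl : forall x, le x x.
Hypothesis le_trans : forall x y z, le x y -> le y z -> le x z.

Lemma alex_T0 : (forall x y, le x y -> le y x -> x = y) -> kolmogorov_space (alex le).
Proof.
move=> anti x y xy.
have nx : forall a : alex le, nbhs a [set z | le a z].
  move=> a; apply/alex_nbhs; exists [set z | le a z]; split => //=.
  by move=> b c h1 h2; exact: le_trans h1 h2.
have [lxy|nlxy] := pselect (le x y).
  exists [set z | le y z]; right; split; first by rewrite inE; exact: nx.
  rewrite inE /= => lyx; by move/eqP: xy; apply; exact: anti.
exists [set z | le x z]; left; split; first by rewrite inE; exact: nx.
by rewrite inE.
Qed.

Lemma alex_max (D : set (alex le)) (m x : alex le) (U : set (alex le)) :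
  D m -> (forall d, D d -> le d m) ->
  (\bigcap_(d in D) upset d) `&` upset x `<=` U ->
  exists2 d, D d & upset d `&` upset x `<=` U.
Proof.
move=> Dm hm hyp; exists m => // z [hz hx]; apply: hyp; split => //.
move=> d Dd; apply/(alex_spec le_refl le_trans).
apply: le_trans (hm d Dd) _; exact/(alex_spec le_refl le_trans).
Qed.

Lemma alex_mono_cont (S : choiceType) (leS : S -> S -> Prop) (f : alex le -> alex leS) :
  (forall x y, le x y -> leS (f x) (f y)) -> continuous f.
Proof.
move=> mf; apply/continuousP => A /alex_open oA; apply/alex_open.
move=> x y /= Ax lxy; exact: oA Ax (mf _ _ lxy).
Qed.
End AlexMore.

Definition leN (m n : nat) : Prop := (m <= n)%N.
Definition leB (a b : bool) : Prop := a ==> b.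
Definition leP (p q : nat * bool) : Prop := (p.1 <= q.1)%N && (p.2 ==> q.2).

Lemma leN_refl x : leN x x. Proof. exact: leqnn. Qed.
Lemma leN_trans x y z : leN x y -> leN y z -> leN x z. Proof. exact: leq_trans. Qed.
Lemma leB_refl x : leB x x. Proof. by case: x. Qed.
Lemma leB_trans x y z : leB x y -> leB y z -> leB x z. Proof. by case: x; case: y; case: z. Qed.
Lemma leP_refl x : leP x x. Proof. by rewrite /leP leqnn implybb. Qed.
Lemma leP_trans x y z : leP x y -> leP y z -> leP x z.
Proof.
case: x y z => [a b] [c d] [e f]; rewrite /leP /= => /andP [h1 h2] /andP [h3 h4].
by rewrite (leq_trans h1 h3) /=; move: h2 h4; case: b; case: d; case: f.
Qed.

Lemma maxN (k : nat) (D : set nat) : D !=set0 -> (forall d, D d -> (d < k)%N) ->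
  exists2 m, D m & forall d, D d -> (d <= m)%N.
Proof.
elim: k D => [|k IH] D [d0 Dd0] hk; first by have := hk _ Dd0.
have [Dk|nDk] := pselect (D k).
  by exists k => // d /hk.
apply: (IH D); first by exists d0.
move=> d Dd; have := hk d Dd; rewrite ltnS leq_eqVlt => /orP [/eqP E|//].
by rewrite E in Dd.
Qed.

Lemma dstarN : dstar_space (alex leN).
Proof.
move=> D x U [D0 _] /alex_open oU [u Uu] hyp.
have [[d Dd ud]|nd] := pselect (exists2 d, D d & (u <= d)%N).
  exists d => // z [/(alex_spec leN_refl leN_trans) hz _].
  exact: oU (oU _ _ Uu ud) hz.
have [m Dm hm] : exists2 m, D m & forall d, D d -> (d <= m)%N.
  apply: (@maxN u D D0) => d Dd; rewrite ltnNge; apply/negP => h.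
  by apply: nd; exists d.
exact: (alex_max leN_refl leN_trans Dm hm hyp).
Qed.

Lemma dstarB : dstar_space (alex leB).
Proof.
move=> D x U [[d0 Dd0] _] _ _ hyp.
have [Dt|nDt] := pselect (D true).
  by apply: (alex_max leB_refl leB_trans Dt _ hyp) => d; rewrite /leB implybT.
apply: (alex_max leB_refl leB_trans Dd0 _ hyp) => d Dd.
have -> : d = false by case: d Dd => // /nDt.
by [].
Qed.

Lemma upnbhs (T : choiceType) (le : T -> T -> Prop) :
  (forall x, le x x) -> (forall x y z, le x y -> le y z -> le x z) ->
  forall a : alex le, nbhs a [set z | le a z].
Proof.
move=> rf tr a; apply/alex_nbhs; exists [set z | le a z]; split => //=.
by move=> b c h1 h2; exact: tr h1 h2.
Qed.

Lemma pair_cont (Y : topologicalType) (g1 : Y -> alex leN) (g2 : Y -> alex leB) :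
  continuous g1 -> continuous g2 ->
  continuous (fun y => ((g1 y, g2 y) : alex leP)).
Proof.
move=> c1 c2; apply/continuousP => A /alex_open oA; rewrite openE => y Ay.
rewrite /interior /=.
have n1 : nbhs y (g1 @^-1` [set z | leN (g1 y) z]).
  by apply: c1; apply: upnbhs; [exact: leN_refl|exact: leN_trans].
have n2 : nbhs y (g2 @^-1` [set z | leB (g2 y) z]).
  by apply: c2; apply: upnbhs; [exact: leB_refl|exact: leB_trans].
apply: filterS (filterI n1 n2) => w [/= h1 h2].
apply: oA Ay _; by rewrite /leP /= h1.
Qed.

Lemma notdstarP : ~ dstar_space (alex leP).
Proof.
have sp := alex_spec leP_refl leP_trans.
move=> h.
have := h [set p : alex leP | p.2 = false] ((0, false) : alex leP)
  [set p : alex leP | p.2 = true].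
case.
- split; first by exists ((0, false) : alex leP).
  move=> a b /= Da Db; exists ((maxn a.1 b.1, false) : alex leP) => //.
  split; apply/sp; rewrite /leP /= ?leq_maxl ?leq_maxr ?Da ?Db //.
- by apply/alex_open => p q /= hp /andP [_]; rewrite hp.
- by exists ((0, true) : alex leP).
- move=> z [hz _].
  have : spec_le ((z.1.+1, false) : alex leP) z by apply: hz.
  by move/sp => /andP []; rewrite /= ltnn.
- move=> d /= Dd hd.
  have : ([set p : alex leP | p.2 = true] : set (alex leP)) d.
    apply: hd; split; apply/sp; rewrite /leP /= ?leqnn // Dd //.
  by rewrite /= Dd.
Qed.

Theorem mainTheorem4 : ~ dstar_reflective.
Proof.
move=> H.
have T0P : kolmogorov_space (alex leP).
  apply: alex_T0; [exact: leP_refl|exact: leP_trans|].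
  case=> [a b] [c d]; rewrite /leP /= => /andP [h1 h2] /andP [h3 h4].
  have -> : a = c by apply/eqP; rewrite eqn_leq h1 h3.
  by move: h2 h4; case: b; case: d.
have [Y [eta [T0Y dY ce univ]]] := H _ T0P.
have T0N : kolmogorov_space (alex leN).
  apply: alex_T0; [exact: leN_refl|exact: leN_trans|].
  by move=> a b h1 h2; apply/eqP; rewrite eqn_leq; apply/andP.
have T0B : kolmogorov_space (alex leB).
  apply: alex_T0; [exact: leB_refl|exact: leB_trans|].
  by case; case.
have c1 : continuous (fun p : alex leP => (p.1 : alex leN)).
  by apply: alex_mono_cont => [[a b] [c d]] /andP [].
have c2 : continuous (fun p : alex leP => (p.2 : alex leB)).
  by apply: alex_mono_cont => [[a b] [c d]] /andP [].
have [g1 [[cg1 e1] _]] := univ _ T0N dstarN _ c1.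
have [g2 [[cg2 e2] _]] := univ _ T0B dstarB _ c2.
apply: notdstarP.
apply: (@transfer _ Y eta (fun y => ((g1 y, g2 y) : alex leP))) => //.
  exact: pair_cont.
move=> [a b]; rewrite /=.
have -> : g1 (eta (a, b)) = a by exact: (congr1 (fun f => f (a, b)) e1).
by have -> : g2 (eta (a, b)) = b by exact: (congr1 (fun f => f (a, b)) e2).
Qed.
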